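(* Let $K_0$ be any continuum. There exist compact Hausdorff spaces $K_1$, $K_2$, $K_3$ such that for each $1\leq i\leq 3$, $K_i$ is an extension of $K_{i-1}$ by continuous functions (i.e. $K_i=K_{i-1}((f^{(i)}_n)_{n\in\mathbb{N}})$ for some pairwise disjoint sequence $(f^{(i)}_n)_{n\in\mathbb{N}}$ in $C_1(K_{i-1})$), and $K_3$ is disconnected.
   Context: All spaces are Hausdorff. A continuum is a metrizable, compact, connected space. For a compact space $K$, $C_1(K)$ denotes the set of continuous functions $K\to[0,1]$; $f,g$ are disjoint if $f\cdot g=0$. For a real function $f$ on $K$, $supp(f)$ is the closure of $\{x\in K: f(x)\neq 0\}$. For a pairwise disjoint sequence $(f_n)_{n\in\mathbb{N}}$ in $C_1(K)$, let $D((f_n)_{n\in\mathbb{N}})$ be the union of all open sets $U\subseteq K$ such that $\{n: U\cap supp(f_n)\neq\emptyset\}$ is finite. The extension of $K$ by $(f_n)_{n\in\mathbb{N}}$, denoted $K((f_n)_{n\in\mathbb{N}})$, is the closure in $K\times[0,1]$ of the graph of the function $\sum_{n\in\mathbb{N}} f_n$ restricted to $D((f_n)_{n\in\mathbb{N}})$. *)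

(* Defs.v *)
From HB Require Import structures.
From mathcomp Require Import all_boot all_order all_algebra.
From mathcomp Require Import all_classical all_reals all_analysis.
Set Implicit Arguments. Unset Strict Implicit. Unset Printing Implicit Defensive.
Import Order.TTheory GRing.Theory Num.Theory.
Import numFieldNormedType.Exports.
Local Open Scope classical_set_scope.
Local Open Scope ring_scope.

Section Ext.
Variables (R : realType) (X : topologicalType).

Definition inC1 (K : set X) (f : X -> R) : Prop :=
  {within K, continuous f} /\ (forall x, K x -> 0 <= f x <= 1).

Definition disj_seq_C1 (K : set X) (f : nat -> X -> R) : Prop :=
  (forall n, inC1 K (f n)) /\
  (forall n m, n <> m -> forall x, K x -> f n x * f m x = 0).

Definition supp (K : set X) (g : X -> R) : set X :=
  K `&` closure [set x | K x /\ g x <> 0].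

(* D((f_n)): union of the (relatively) open subsets U = K ∩ V of K meeting
   only finitely many supports. *)
Definition Dset (K : set X) (f : nat -> X -> R) : set X :=
  [set x | K x /\ exists V : set X, open V /\ V x /\
       finite_set [set n | (V `&` K `&` supp K (f n)) !=set0]].

Definition sumf (f : nat -> X -> R) (x : X) : R :=
  limn (fun N => \sum_(0 <= n < N) f n x).

Definition ext (K : set X) (f : nat -> X -> R) : set (X * R)%type :=
  closure [set p | Dset K f p.1 /\ p.2 = sumf f p.1].

End Ext.

(* Main.v *)
Require Import Defs.
From HB Require Import structures.
From mathcomp Require Import all_boot all_order all_algebra.
From mathcomp Require Import all_classical all_reals all_analysis.
From mathcomp Require Import zify ring lra.
Import Order.TTheory GRing.Theory Num.Theory.
Import numFieldNormedType.Exports.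
Local Open Scope classical_set_scope.
Local Open Scope ring_scope.

Section Generic.
Variables (R : realType) (X : topologicalType).

Lemma sumf_lim (f : nat -> X -> R) x c :
  (exists M, forall N, (M <= N)%N -> \sum_(0 <= n < N) f n x = c) -> sumf f x = c.
Proof.
move=> [M HM]; rewrite /sumf; apply: lim_near_cst; first exact: Rhausdorff.
by exists M => // N /= HN; apply: HM.
Qed.

Lemma sumf_zero (f : nat -> X -> R) x : (forall n, f n x = 0) -> sumf f x = 0.
Proof.
move=> H; apply: sumf_lim; exists 0%N => N _; rewrite big1 // => n _; exact: H.
Qed.

Lemma psum_two (f : nat -> X -> R) x i j : i <> j ->
  (forall n, n <> i -> n <> j -> f n x = 0) -> forall N,
  \sum_(0 <= n < N) f n x = (if (i < N)%N then f i x else 0) + (if (j < N)%N then f j x else 0).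
Proof.
move=> ij H; elim=> [|N IH]; first by rewrite big_geq // !ltn0 addr0.
rewrite big_nat_recr //= IH !ltnS [(i <= N)%N]leq_eqVlt [(j <= N)%N]leq_eqVlt.
have [->|Ni] := eqVneq N i.
  have /negbTE -> : j != i by apply/eqP => E; apply: ij; rewrite E.
  by rewrite ltnn /= add0r addrC.
have [->|Nj] := eqVneq N j.
  by rewrite ltnn /= addr0.
by rewrite /= (H N) ?addr0 //; apply/eqP.
Qed.

Lemma sumf_two (f : nat -> X -> R) x i j : i <> j ->
  (forall n, n <> i -> n <> j -> f n x = 0) -> sumf f x = f i x + f j x.
Proof.
move=> ij H; apply: sumf_lim; exists (maxn i j).+1 => N HN.
rewrite (@psum_two f x i j ij H N).
have -> : (i < N)%N by apply: leq_trans HN; rewrite ltnS leq_maxl.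
by have -> : (j < N)%N by apply: leq_trans HN; rewrite ltnS leq_maxr.
Qed.

Lemma sumf_one (f : nat -> X -> R) x i :
  (forall n, n <> i -> f n x = 0) -> sumf f x = f i x.
Proof.
move=> H; have ne : i <> i.+1 by lia.
rewrite (@sumf_two f x i i.+1 ne); first by rewrite (H i.+1) ?addr0 //; lia.
by move=> n ni _; exact: H.
Qed.

Lemma disj_sumf01 (K : set X) (f : nat -> X -> R) x : disj_seq_C1 K f -> K x -> 0 <= sumf f x <= 1.
Proof.
move=> [C D] Kx.
have [[m fm]|] := pselect (exists m, f m x != 0).
  rewrite (@sumf_one f x m); first by have [_ ] := C m; apply.
  move=> n nm; have := D n m nm x Kx; move/eqP; rewrite mulf_eq0 (negbTE fm) orbF.
  by move/eqP.
move=> nE; rewrite sumf_zero; first by rewrite lexx ler01.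
move=> n; case: (eqVneq (f n x) 0) => // fn; exfalso; apply: nE; by exists n.
Qed.

Lemma closure_zero (A W : set X) (F : X -> R) p : closure A p -> open W -> W p ->
  {for p, continuous F} -> (forall q, A q -> W q -> F q = 0) -> F p = 0.
Proof.
move=> cA oW Wp cF H; apply/eqP/negPn/negP => Fp.
have N1 : nbhs p (F @^-1` [set r | r != 0]).
  apply: cF; apply: open_nbhs_nbhs; split => //.
have N2 : nbhs p W by apply: open_nbhs_nbhs.
have [q [Aq [Fq Wq]]] := cA _ (filterI N1 N2).
by move: Fq; rewrite /= (H q Aq Wq) eqxx.
Qed.

Lemma fin_bound (S : set nat) : finite_set S -> exists N, forall n, S n -> (n < N)%N.
Proof.
move=> fS; exists (\max_(n <- finmap.enum_fset (fset_set S)) n).+1 => n Sn.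
rewrite ltnS; apply: (@leq_bigmax_seq _ _ xpredT id) => //.
by rewrite in_fset_set // inE.
Qed.

Lemma supp_sub (K C : set X) (g : X -> R) : closed C -> (forall x, K x -> g x != 0 -> C x) ->
  supp K g `<=` C.
Proof.
move=> cC H x [_ cx]; rewrite (closure_id C).1 //; apply: closureS cx.
by move=> y [Ky /eqP gy]; apply: H.
Qed.

Lemma Dset_intro (K V : set X) (f : nat -> X -> R) x : K x -> open V -> V x ->
  (forall n y, V y -> K y -> supp K (f n) y -> False) -> Dset K f x.
Proof.
move=> Kx oV Vx H; split => //; exists V; split => //; split => //.
have -> : [set n | (V `&` K `&` supp K (f n)) !=set0] = set0.
  by apply/seteqP; split => n //= [y [[Vy Ky] sy]]; exfalso; exact: H n y Vy Ky sy.
exact: finite_set0.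
Qed.

Lemma graph_ext (K : set X) (f : nat -> X -> R) x : Dset K f x -> ext K f (x, sumf f x).
Proof. by move=> D; apply: subset_closure. Qed.

End Generic.

Lemma fst_cont (U V : topologicalType) : continuous (@fst U V).
Proof. move=> x; exact: cvg_fst. Qed.
Lemma snd_cont (U V : topologicalType) : continuous (@snd U V).
Proof. move=> x; exact: cvg_snd. Qed.

Lemma pre_closed (U V : topologicalType) (g : U -> V) (A : set V) :
  continuous g -> closed A -> closed (g @^-1` A).
Proof. by move=> cg cA; apply: preimage_closed => // x _; exact: cg. Qed.

Lemma pre_open (U V : topologicalType) (g : U -> V) (A : set V) :
  continuous g -> open A -> open (g @^-1` A).
Proof. by move=> cg cA; apply: open_comp => // x _; exact: cg. Qed.

Section Generic2.
Variables (R : realType) (X : topologicalType).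

Lemma ext_sub (K : set X) (f : nat -> X -> R) : closed K -> disj_seq_C1 K f ->
  ext K f `<=` K `*` (`[0, 1] : set R).
Proof.
move=> cK df.
have cP : closed (K `*` (`[0, 1] : set R)).
  have -> : K `*` (`[0, 1] : set R) = (fst @^-1` K) `&` (snd @^-1` (`[0, 1] : set R)) by [].
  apply: closedI; apply: pre_closed => //; [exact: fst_cont|exact: snd_cont|].
  exact: interval_closed.
have GP : [set p | Dset K f p.1 /\ p.2 = sumf f p.1] `<=` K `*` (`[0, 1] : set R).
  move=> -[x t] /= [[Kx _] ->]; split => //.
  by rewrite /= in_itv /=; apply: disj_sumf01 df Kx.
by move=> p /(closureS GP); rewrite -(closure_id _).1.
Qed.

Lemma ext_compact (K : set X) (f : nat -> X -> R) : compact K -> closed K ->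
  disj_seq_C1 K f -> compact (ext K f) /\ closed (ext K f).
Proof.
move=> cpK cK df; split; last exact: closed_closure.
apply: (@subclosed_compact _ (ext K f) (K `*` (`[0, 1] : set R))).
- exact: closed_closure.
- apply: compact_setX => //; exact: segment_compact.
- exact: ext_sub.
Qed.

Lemma not_conn (K A B : set X) : closed A -> closed B -> K `<=` A `|` B ->
  A `&` B = set0 -> (K `&` A) !=set0 -> (K `&` B) !=set0 -> ~ connected K.
Proof.
move=> cA cB KAB AB0 nA nB; apply/connectedPn.
exists (fun b => if b then K `&` B else K `&` A); split.
- by case.
- apply/seteqP; split => x /=.
    by move=> Kx; case: (KAB x Kx) => ?; [left|right].
  by case=> -[].
- split.
  + apply/seteqP; split => x //= [cx [_ Bx]].
    have Ax : A x by rewrite (closure_id A).1 //; apply: closureS cx => y [].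
    suff : (A `&` B) x by rewrite AB0.
    by split.
  + apply/seteqP; split => x //= [[_ Ax] cx].
    have Bx : B x by rewrite (closure_id B).1 //; apply: closureS cx => y [].
    suff : (A `&` B) x by rewrite AB0.
    by split.
Qed.

End Generic2.

Section Funs.
Context {R : realType}.

Section CH.
Variable Y : topologicalType.
Lemma contB (f g : Y -> R) x : {for x, continuous f} -> {for x, continuous g} ->
  {for x, continuous (fun s => f s - g s)}.
Proof. move=> cf cg; exact: cvgB. Qed.
Lemma contD (f g : Y -> R) x : {for x, continuous f} -> {for x, continuous g} ->
  {for x, continuous (fun s => f s + g s)}.
Proof. move=> cf cg; exact: cvgD. Qed.
Lemma contM (f g : Y -> R) x : {for x, continuous f} -> {for x, continuous g} ->
  {for x, continuous (fun s => f s * g s)}.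
Proof. move=> cf cg; exact: cvgM. Qed.
Lemma contN (f : Y -> R) x : {for x, continuous f} -> {for x, continuous (fun s => `|f s|)}.
Proof. move=> cf; exact: cvg_norm. Qed.
Lemma contV (f : Y -> R) x : f x != 0 -> {for x, continuous f} ->
  {for x, continuous (fun s => (f s)^-1)}.
Proof. move=> h cf; exact: cvgV. Qed.
Lemma contC (c : R) x : {for x, continuous (fun s : Y => c)}.
Proof. exact: cvg_cst. Qed.
Lemma contMin (f g : Y -> R) : continuous f -> continuous g ->
  continuous (fun s => Num.min (f s) (g s)).
Proof. by move=> cf cg; apply: (@min_fun_continuous _ _ _ f g). Qed.
End CH.

Definition clampf (lo hi s : R) := Num.min (Num.max s lo) hi.

Lemma clamp_cont lo hi : continuous (clampf lo hi).
Proof.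
apply: (@min_fun_continuous _ _ _ (fun s => Num.max s lo) (cst hi)); last exact: cst_continuous.
apply: (@max_fun_continuous _ _ _ id (cst lo)); last exact: cst_continuous.
by move=> x.
Qed.

Lemma clamp_in lo hi s : lo <= hi -> lo <= clampf lo hi s <= hi.
Proof.
by move=> lh; rewrite /clampf le_min le_max lexx orbT lh ge_min lexx orbT.
Qed.

Lemma clamp_id lo hi s : lo <= s <= hi -> clampf lo hi s = s.
Proof. by case/andP=> ls sh; rewrite /clampf (max_l ls) (min_l sh). Qed.

Lemma clamp_lo lo hi s : s <= lo -> lo <= hi -> clampf lo hi s = lo.
Proof. by move=> sl lh; rewrite /clampf (max_r sl) (min_l lh). Qed.

Lemma clamp_hi lo hi s : hi <= s -> lo <= hi -> clampf lo hi s = hi.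
Proof. by move=> hs lh; rewrite /clampf (max_l (le_trans lh hs)) (min_r hs). Qed.

Lemma le_inv (x y : R) : 0 < x -> 0 < y -> (x^-1 <= y^-1) = (y <= x).
Proof. by move=> x0 y0; rewrite lef_pV2 // posrE. Qed.
Lemma lt_inv (x y : R) : 0 < x -> 0 < y -> (x^-1 < y^-1) = (y < x).
Proof. by move=> x0 y0; rewrite ltf_pV2 // posrE. Qed.

Lemma inv_bounds (c1 c2 u : R) : 0 < c1 -> c1 <= c2 -> c2^-1 <= u <= c1^-1 ->
  c1 <= u^-1 <= c2.
Proof.
move=> c10 c12 /andP[h1 h2].
have c20 : 0 < c2 by apply: lt_le_trans c12.
have u0 : 0 < u by apply: lt_le_trans h1; rewrite invr_gt0.
by rewrite -[c1]invrK -[c2]invrK !le_inv ?invr_gt0 // h1 h2.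
Qed.

Lemma natS1 n : (n.+1%:R : R) = n%:R + 1.
Proof. by rewrite -addn1 natrD. Qed.
Lemma natS2 n : (n.+2%:R : R) = n%:R + 2.
Proof. by rewrite -addn2 natrD. Qed.
Lemma nat_ge0 n : (0 : R) <= n%:R.
Proof. exact: ler0n. Qed.

Definition g1 (n : nat) (s : R) :=
  1 - `|2 * (clampf (n.+2%:R)^-1 (n.+1%:R)^-1 s)^-1 - (2 * n%:R + 3)|.

Lemma g1_clamp n s : n.+1%:R <= (clampf (n.+2%:R)^-1 (n.+1%:R)^-1 s)^-1 <= (n.+2%:R : R).
Proof.
apply: inv_bounds; first by rewrite ltr0n.
  by rewrite ler_nat.
by apply: clamp_in; rewrite le_inv ?ltr0n // ler_nat.
Qed.

Lemma cont_tent (Y : topologicalType) (h : Y -> R) (c : R) x :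
  {for x, continuous h} -> h x != 0 ->
  {for x, continuous (fun s => 1 - `|2 * (h s)^-1 - c|)}.
Proof.
move=> ch hx.
have := @contB _ (fun=> 1) (fun s => `|2 * (h s)^-1 - c|) x; move=> H; apply: H; first exact: contC.
have := @contN _ (fun s => 2 * (h s)^-1 - c) x; move=> H; apply: H.
have := @contB _ (fun s => 2 * (h s)^-1) (fun=> c) x; move=> H; apply: H; last exact: contC.
have := @contM _ (fun=> 2) (fun s => (h s)^-1) x; move=> H; apply: H; first exact: contC.
have := @contV _ h x hx; move=> H; apply: H; exact: ch.
Qed.

Lemma cont_trap (Y : topologicalType) (h : Y -> R) (c : R) x :
  {for x, continuous h} -> h x != 0 ->
  {for x, continuous (fun s => Num.min 1 (3 - 6 * `|(h s)^-1 - c|))}.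
Proof.
move=> ch hx.
have := @continuous_min R Y (fun=> 1) (fun s => 3 - 6 * `|(h s)^-1 - c|) x; move=> H; apply: H; first exact: contC.
have := @contB _ (fun=> 3) (fun s => 6 * `|(h s)^-1 - c|) x; move=> H; apply: H; first exact: contC.
have := @contM _ (fun=> 6) (fun s => `|(h s)^-1 - c|) x; move=> H; apply: H; first exact: contC.
have := @contN _ (fun s => (h s)^-1 - c) x; move=> H; apply: H.
have := @contB _ (fun s => (h s)^-1) (fun=> c) x; move=> H; apply: H; last exact: contC.
have := @contV _ h x hx; move=> H; apply: H; exact: ch.
Qed.

Lemma g1_cont n : continuous (g1 n).
Proof.
move=> x; rewrite /g1.
have hpos : clampf (n.+2%:R)^-1 (n.+1%:R)^-1 x != 0.
  have hle : (n.+2%:R : R)^-1 <= (n.+1%:R)^-1 by rewrite le_inv ?ltr0n // ler_nat.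
  have /andP[h _] := @clamp_in (n.+2%:R)^-1 (n.+1%:R)^-1 x hle.
  by apply/lt0r_neq0/(lt_le_trans _ h); rewrite invr_gt0 ltr0n.
exact: cont_tent (clamp_cont _ _ x) hpos.
Qed.

Lemma lt_inv_r (s c : R) : 0 < s -> 0 < c -> (c < s^-1) = (s < c^-1).
Proof. by move=> s0 c0; rewrite -{2}[s]invrK lt_inv // invr_gt0. Qed.
Lemma lt_inv_l (s c : R) : 0 < s -> 0 < c -> (s^-1 < c) = (c^-1 < s).
Proof. by move=> s0 c0; rewrite -{2}[s]invrK lt_inv // invr_gt0. Qed.
Lemma le_inv_r (s c : R) : 0 < s -> 0 < c -> (c <= s^-1) = (s <= c^-1).
Proof. by move=> s0 c0; rewrite -{2}[s]invrK le_inv // invr_gt0. Qed.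
Lemma le_inv_l (s c : R) : 0 < s -> 0 < c -> (s^-1 <= c) = (c^-1 <= s).
Proof. by move=> s0 c0; rewrite -{2}[s]invrK le_inv // invr_gt0. Qed.

Lemma natS3 n : (n.+3%:R : R) = n%:R + 3.
Proof. by rewrite -addn3 natrD. Qed.

Lemma g1_01 n s : 0 <= g1 n s <= 1.
Proof.
rewrite /g1; set w := (clampf _ _ s)^-1.
have := g1_clamp n s; rewrite -/w (natS1 n) (natS2 n) => /andP[h1 h2].
have : `|2 * w - (2 * n%:R + 3)| <= 1 by rewrite ler_norml; apply/andP; split; lra.
have := normr_ge0 (2 * w - (2 * n%:R + 3)).
by move=> a b; apply/andP; split; lra.
Qed.

Lemma g1_supp n s : g1 n s != 0 -> 0 < s /\ n.+1%:R < s^-1 < n.+2%:R.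
Proof.
have c1 : (0 : R) < n.+1%:R by rewrite ltr0n.
have c2 : (0 : R) < n.+2%:R by rewrite ltr0n.
have hle : (n.+2%:R : R)^-1 <= (n.+1%:R)^-1 by rewrite le_inv // ler_nat.
rewrite /g1 => H.
case: (leP s (n.+2%:R)^-1) => h1.
  move: H; rewrite (clamp_lo _ _ _ h1 hle) invrK (natS2 n).
  have -> : 2 * (n%:R + 2) - (2 * n%:R + 3) = 1 :> R by ring.
  by rewrite normr1 subrr eqxx.
case: (leP (n.+1%:R)^-1 s) => h2.
  move: H; rewrite (clamp_hi _ _ _ h2 hle) invrK (natS1 n).
  have -> : 2 * (n%:R + 1) - (2 * n%:R + 3) = - 1 :> R by ring.
  by rewrite normrN normr1 subrr eqxx.
have s0 : 0 < s by apply: lt_trans h1; rewrite invr_gt0.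
split => //; rewrite lt_inv_r // lt_inv_l // h2 h1 //.
Qed.
Arguments g1_supp {n s}.

Lemma g1_val n s : 0 < s -> n.+1%:R <= s^-1 <= n.+2%:R ->
  g1 n s = 1 - `|2 * s^-1 - (2 * n%:R + 3)|.
Proof.
move=> s0 /andP[h1 h2].
have c1 : (0 : R) < n.+1%:R by rewrite ltr0n.
have c2 : (0 : R) < n.+2%:R by rewrite ltr0n.
rewrite /g1 clamp_id //; apply/andP; split.
  by rewrite -le_inv_l.
by rewrite -le_inv_r.
Qed.

Definition kk (n : nat) (s : R) :=
  Num.min 1 (3 - 6 * `|(clampf (n%:R + 3/2)^-1 (n%:R + 1/2)^-1 s)^-1 - (n%:R + 1)|).

Lemma kk_bnd n : (0 : R) < n%:R + 1/2 /\ (n%:R + 3/2 : R)^-1 <= (n%:R + 1/2)^-1.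
Proof.
have h0 := nat_ge0 n.
have p1 : (0 : R) < n%:R + 1/2 by lra.
split => //; rewrite le_inv //; lra.
Qed.

Lemma kk_clamp n s : n%:R + 1/2 <= (clampf (n%:R + 3/2)^-1 (n%:R + 1/2)^-1 s)^-1 <= (n%:R + 3/2 : R).
Proof.
have [p1 hle] := kk_bnd n.
apply: inv_bounds => //; first by lra.
exact: clamp_in.
Qed.

Lemma kk_01 n s : 0 <= kk n s <= 1.
Proof.
rewrite /kk; set w := (clampf _ _ s)^-1.
have := kk_clamp n s; rewrite -/w => /andP[h1 h2].
have : `|w - (n%:R + 1)| <= 1/2 by rewrite ler_norml; apply/andP; split; lra.
move=> a; rewrite ge_min lexx /= le_min ler01 /=; lra.
Qed.

Lemma kk_cont n : continuous (kk n).
Proof.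
move=> x; rewrite /kk.
have [p1 hle] := kk_bnd n.
have hpos : clampf (n%:R + 3/2)^-1 (n%:R + 1/2)^-1 x != 0.
  have /andP[h _] := @clamp_in (n%:R + 3/2)^-1 (n%:R + 1/2)^-1 x hle.
  by apply/lt0r_neq0/(lt_le_trans _ h); rewrite invr_gt0; lra.
exact: cont_trap (clamp_cont _ _ x) hpos.
Qed.

Lemma kk_supp n s : kk n s != 0 -> 0 < s /\ n%:R + 1/2 < s^-1 < n%:R + 3/2.
Proof.
have [p1 hle] := kk_bnd n.
have p2 : (0 : R) < n%:R + 3/2 by lra.
rewrite /kk => H.
case: (leP s (n%:R + 3/2)^-1) => h1.
  move: H; rewrite (clamp_lo _ _ _ h1 hle) invrK.
  have -> : 3 - 6 * `|n%:R + 3 / 2 - (n%:R + 1)| = 0 :> R.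
    have -> : n%:R + 3 / 2 - (n%:R + 1) = 1/2 :> R by lra.
    by rewrite ger0_norm //; lra.
  by rewrite (min_r ler01) eqxx.
case: (leP (n%:R + 1/2)^-1 s) => h2.
  move: H; rewrite (clamp_hi _ _ _ h2 hle) invrK.
  have -> : 3 - 6 * `|n%:R + 1 / 2 - (n%:R + 1)| = 0 :> R.
    have -> : n%:R + 1 / 2 - (n%:R + 1) = - (1/2) :> R by lra.
    by rewrite normrN ger0_norm //; lra.
  by rewrite (min_r ler01) eqxx.
have s0 : 0 < s by apply: lt_trans h1; rewrite invr_gt0.
split => //; rewrite lt_inv_r // lt_inv_l // h2 h1 //.
Qed.
Arguments kk_supp {n s}.

Lemma kk_val n s : 0 < s -> `|s^-1 - (n%:R + 1)| <= 1/3 -> kk n s = 1.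
Proof.
move=> s0 H.
have [p1 hle] := kk_bnd n.
have p2 : (0 : R) < n%:R + 3/2 by lra.
move: (H); rewrite ler_norml => /andP[h1 h2].
rewrite /kk clamp_id; last first.
  apply/andP; split; first by rewrite -le_inv_l //; lra.
  by rewrite -le_inv_r //; lra.
by rewrite min_l //; lra.
Qed.

Lemma g1_disj n m s : n <> m -> g1 n s * g1 m s = 0.
Proof.
move=> nm; case: (eqVneq (g1 n s) 0) => [->|a]; first by rewrite mul0r.
case: (eqVneq (g1 m s) 0) => [->|b]; first by rewrite mulr0.
exfalso; have [s0 /andP[a1 a2]] := g1_supp a; have [_ /andP[b1 b2]] := g1_supp b.
have : (n.+1%:R : R) < m.+2%:R by apply: lt_trans b2.
have : (m.+1%:R : R) < n.+2%:R by apply: lt_trans a2.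
rewrite !ltr_nat => e1 e2; apply: nm; lia.
Qed.

Lemma kk_disj n m s : n <> m -> kk n s * kk m s = 0.
Proof.
move=> nm; case: (eqVneq (kk n s) 0) => [->|a]; first by rewrite mul0r.
case: (eqVneq (kk m s) 0) => [->|b]; first by rewrite mulr0.
exfalso; have [s0 /andP[a1 a2]] := kk_supp a; have [_ /andP[b1 b2]] := kk_supp b.
have : (n%:R : R) < m.+1%:R by rewrite (natS1 m); lra.
have : (m%:R : R) < n.+1%:R by rewrite (natS1 n); lra.
rewrite !ltr_nat => e1 e2; apply: nm; lia.
Qed.

Lemma g1_zero_two m s : m.+1%:R < s^-1 < m.+3%:R ->
  forall n, n <> m -> n <> m.+1 -> g1 n s = 0.
Proof.
move=> /andP[h1 h2] n n1 n2; case: (eqVneq (g1 n s) 0) => // /g1_supp[s0 /andP[a1 a2]]; exfalso.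
have : (n.+1%:R : R) < m.+3%:R by apply: lt_trans h2.
have : (m.+1%:R : R) < n.+2%:R by apply: lt_trans a2.
rewrite !ltr_nat => e1 e2.
have : n = m \/ n = m.+1 by lia.
by case.
Qed.

Lemma find_m (s : R) : 0 < s -> 2 <= s^-1 -> exists m, m.+2%:R <= s^-1 < m.+3%:R.
Proof.
move=> s0 h2.
have w0 : 0 <= s^-1 by lra.
have := truncn_itv w0; set k := Num.truncn _ => /andP[k1 k2].
have : (1 < k)%N by rewrite /k truncn_gt_nat.
move=> hk; exists (k - 2)%N.
have -> : (k - 2).+2 = k by lia.
by rewrite k1 k2.
Qed.

Lemma tri s m : 0 < s -> m.+2%:R <= s^-1 < m.+3%:R ->
  kk m.+1 s = 1 \/ kk m.+2 s = 1 \/ 2/3 <= g1 m.+1 s.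
Proof.
move=> s0 /andP[h1 h2]; move: h1 h2; rewrite (natS2 m) (natS3 m) => h1 h2.
have hm := nat_ge0 m.
case: (lerP (s^-1) (m%:R + 2 + 1/3)) => e1.
  left; apply: kk_val => //; rewrite (natS1 m) ler_norml; apply/andP; split; lra.
case: (lerP (m%:R + 3 - 1/3) (s^-1)) => e2.
  right; left; apply: kk_val => //; rewrite (natS2 m) ler_norml; apply/andP; split; lra.
right; right; rewrite g1_val //; last by rewrite (natS2 m) (natS3 m) (ltW h2) andbT; lra.
have : `|2 * s^-1 - (2 * m.+1%:R + 3)| <= 1/3.
  by rewrite (natS1 m) ler_norml; apply/andP; split; lra.
lra.
Qed.


Lemma g1_one m s : m.+2%:R <= s^-1 < m.+3%:R -> forall n, n <> m.+1 -> g1 n s = 0.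
Proof.
move=> /andP[h1 h2] n n1; case: (eqVneq (g1 n s) 0) => // /g1_supp[s0 /andP[a1 a2]]; exfalso.
have : (n.+1%:R : R) < m.+3%:R by apply: lt_trans h2.
have : (m.+2%:R : R) < n.+2%:R by apply: le_lt_trans a2.
rewrite !ltr_nat => e1 e2; apply: n1; lia.
Qed.


Lemma g1_lt1 n s : g1 n s != 0 -> s < 1.
Proof.
move=> /g1_supp[s0 /andP[a1 _]].
have : (1 : R) < s^-1 by apply: le_lt_trans a1; rewrite (natS1 n) lerDr nat_ge0.
by rewrite lt_inv_r ?invr1.
Qed.

Lemma kk_lt2 n s : kk n s != 0 -> s < 2.
Proof.
move=> /kk_supp[s0 /andP[a1 _]].
have : (2 : R)^-1 < s^-1 by apply: le_lt_trans a1; have := nat_ge0 n; lra.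
by rewrite lt_inv.
Qed.

End Funs.

Section Main.
Variables (R : realType) (T : pseudoMetricType R).
Variable phi : T -> R.
Hypothesis phic : continuous phi.

Definition F1 n (x : T) : R := g1 n (phi x).
Definition F2 n (p : T * R) : R := kk n (phi p.1).
Definition F3 (n : nat) (p : (T * R) * R) : R := 0.

Lemma cphi (h : R -> R) : continuous h -> continuous (fun x : T => h (phi x)).
Proof.
move=> ch x; have := @continuous_comp _ _ _ phi h x (phic x) (ch _).
by move=> H; apply: H.
Qed.

Lemma cphi1 (h : R -> R) : continuous h -> continuous (fun p : T * R => h (phi p.1)).
Proof.
move=> ch p; have := @continuous_comp _ _ _ (@fst T R) (fun x => h (phi x)) p
  (@fst_cont T R p) (cphi _ ch _).
by move=> H; apply: H.
Qed.

Lemma F1_disj : disj_seq_C1 [set: T] F1.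
Proof.
split; last by move=> n m nm x _; exact: g1_disj.
move=> n; split; last by move=> x _; exact: g1_01.
apply: continuous_subspaceT; exact: (cphi _ (@g1_cont R n)).
Qed.

Lemma F2_disj (K : set (T * R)) : disj_seq_C1 K F2.
Proof.
split; last by move=> n m nm x _; exact: kk_disj.
move=> n; split; last by move=> x _; exact: kk_01.
apply: continuous_subspaceT; exact: (cphi1 _ (@kk_cont R n)).
Qed.

Lemma F3_disj (K : set ((T * R) * R)) : disj_seq_C1 K F3.
Proof.
split; last by move=> n m nm x _; rewrite /F3 mulr0.
move=> n; split; last by move=> x _; rewrite /F3 lexx ler01.
apply: continuous_subspaceT => x; exact: cvg_cst.
Qed.

Lemma sumF1_nonpos x : phi x <= 0 -> sumf F1 x = 0.
Proof.
move=> h; apply: sumf_zero => n; rewrite /F1.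
case: (eqVneq (g1 n (phi x)) 0) => // /g1_supp[s0 _].
by exfalso; move: h; rewrite leNgt s0.
Qed.

Lemma sumF2_nonpos p : phi p.1 <= 0 -> sumf F2 p = 0.
Proof.
move=> h; apply: sumf_zero => n; rewrite /F2.
case: (eqVneq (kk n (phi p.1)) 0) => // /kk_supp[s0 _].
by exfalso; move: h; rewrite leNgt s0.
Qed.

Let K1 := ext [set: T] F1.

Lemma openW1 (A : set R) : open A -> open [set p : T * R | A (phi p.1)].
Proof.
move=> oA; have c : continuous (fun p : T * R => phi p.1).
  by apply: (cphi1 id) => x; exact: cvg_id.
exact: (@pre_open _ _ _ A c oA).
Qed.

Lemma K1_neg x t : K1 (x, t) -> phi x < 0 -> t = 0.
Proof.
move=> K1p hx.
have := @closure_zero R (T * R)%type _ [set p : T * R | phi p.1 < 0] (@snd T R) (x, t) K1p.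
apply => //.
- exact: (openW1 [set s : R | s < 0] (@open_lt R 0)).
- exact: snd_cont.
- move=> -[y s] /= [_ ->] hy; apply: sumF1_nonpos; exact: ltW.
Qed.


Lemma K1_pos x t m : K1 (x, t) -> 0 < phi x -> m.+2%:R <= (phi x)^-1 < m.+3%:R ->
  t = g1 m.+1 (phi x).
Proof.
move=> K1p s0 /andP[h1 h2].
have c1 : (0 : R) < m.+1%:R by rewrite ltr0n.
have c3 : (0 : R) < m.+3%:R by rewrite ltr0n.
set A := [set s : R | (m.+3%:R)^-1 < s] `&` [set s : R | s < (m.+1%:R)^-1].
have oA : open A by apply: openI; [exact: open_gt|exact: open_lt].
have oW := openW1 A oA.
have Wx : [set p : T * R | A (phi p.1)] (x, t).
  split => /=; first by rewrite -lt_inv_l.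
  rewrite -lt_inv_r //; apply: lt_le_trans h1; rewrite ltr_nat //.
have cF : continuous (fun p : T * R => p.2 - (g1 m (phi p.1) + g1 m.+1 (phi p.1))).
  move=> p.
  have := @contB R _ (@snd T R) (fun p => g1 m (phi p.1) + g1 m.+1 (phi p.1)) p (@snd_cont T R p).
  move=> H; apply: H.
  have := @contD R _ (fun p => g1 m (phi p.1)) (fun p => g1 m.+1 (phi p.1)) p
     (cphi1 _ (@g1_cont R m) p) (cphi1 _ (@g1_cont R m.+1) p).
  by move=> H; apply: H.
have := @closure_zero R (T * R)%type _ _ (fun p : T * R => p.2 - (g1 m (phi p.1) + g1 m.+1 (phi p.1))) (x, t) K1p oW Wx (cF _).
move=> /(_ _) H0.
have E : t - (g1 m (phi x) + g1 m.+1 (phi x)) = 0.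
  apply: H0 => -[y s] /= [_ ->] [hy1 hy2].
  have y0 : 0 < phi y by apply: lt_trans hy1; rewrite invr_gt0.
  have ne : m <> m.+1 by lia.
  rewrite (@sumf_two R T F1 y m m.+1 ne); first by rewrite /F1 subrr.
  move=> n n1 n2; rewrite /F1; apply: (@g1_zero_two R m (phi y) _ n n1 n2).
  apply/andP; split; first by rewrite lt_inv_r.
  by rewrite lt_inv_l.
have Z : g1 m (phi x) = 0.
  case: (eqVneq (g1 m (phi x)) 0) => // /g1_supp[_ /andP[_ b]].
  by exfalso; move: b; rewrite ltNge h1.
by move: E; rewrite Z add0r => /eqP; rewrite subr_eq0 => /eqP.
Qed.


Lemma hard p : K1 p -> phi p.1 = 0 -> 0 < p.2 < 2/3 -> Dset K1 F2 p -> False.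
Proof.
move=> K1p h0 /andP[t0 t1] [_ [V [oV [Vp fS]]]].
have [N HN] := @fin_bound _ fS.
have c3 : (0 : R) < N.+3%:R by rewrite ltr0n.
set d := (N.+3%:R : R)^-1.
have d0 : 0 < d by rewrite invr_gt0.
set B := V `&` ([set q : T * R | phi q.1 < d] `&`
   ([set q : T * R | 0 < q.2] `&` [set q : T * R | q.2 < 2/3])).
have oB : open B.
  apply: openI => //; apply: openI.
    exact: (openW1 [set s : R | s < d] (@open_lt R d)).
  apply: openI.
    exact: (@pre_open _ _ _ [set s : R | 0 < s] (@snd_cont T R) (@open_gt R 0)).
  exact: (@pre_open _ _ _ [set s : R | s < 2/3] (@snd_cont T R) (@open_lt R (2/3))).
have Bp : B p by split => //; split => /=; [rewrite h0|split].

have [q [Gq Bq]] := K1p B (open_nbhs_nbhs (conj oB Bp)).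
move: q Gq Bq => -[y t] /= [Dy ->] [Vq [hy [ht0 ht1]]].
move: hy ht0 ht1 => /= hy ht0 ht1.
have y0 : 0 < phi y.
  rewrite ltNge; apply/negP => hy0; move: ht0; rewrite sumF1_nonpos //.
  by rewrite ltxx.
have wN : (N.+3%:R : R) < (phi y)^-1 by rewrite lt_inv_r.
have w2 : (2 : R) <= (phi y)^-1.
  apply: le_trans (ltW wN); rewrite (natS3 N); have := nat_ge0 N (R:=R); lra.
have [m hm] := find_m (phi y) y0 w2.
have Es : sumf F1 y = g1 m.+1 (phi y).
  by apply: sumf_one => n n1; rewrite /F1; exact: (g1_one m (phi y) hm n n1).
have mN : (N < m)%N.
  have : (N.+3%:R : R) < m.+3%:R by case/andP: hm => _; apply: lt_trans wN.
  by rewrite ltr_nat.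
have key : forall n0, (m < n0)%N -> kk n0 (phi y) = 1 -> False.
  move=> n0 mn0 k1.
  have Sn0 : [set n | (V `&` K1 `&` supp K1 (F2 n)) !=set0] n0.
    exists (y, sumf F1 y); split; first split => //.
    - exact: graph_ext.
    - split; first exact: graph_ext.
      apply: subset_closure; split; first exact: graph_ext.
      by rewrite /F2 /= k1 => /eqP; rewrite oner_eq0.
  have := HN _ Sn0; lia.
case: (tri (phi y) m y0 hm) => [k1|[k1|g23]].
- by apply: (key m.+1).
- by apply: (key m.+2).
- by move: ht1; rewrite Es ltNge g23.
Qed.


Lemma sumF1_big x : 2 <= phi x -> sumf F1 x = 0.
Proof.
move=> h; apply: sumf_zero => n; rewrite /F1.
case: (eqVneq (g1 n (phi x)) 0) => // /g1_lt1 h1; exfalso.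
by move: h; rewrite leNgt (lt_trans h1) //; lra.
Qed.

Lemma sumF2_big p : 2 <= phi p.1 -> sumf F2 p = 0.
Proof.
move=> h; apply: sumf_zero => n; rewrite /F2.
case: (eqVneq (kk n (phi p.1)) 0) => // /kk_lt2 h1; exfalso.
by move: h; rewrite leNgt h1.
Qed.

Lemma sumF2_one p n : kk n (phi p.1) = 1 -> sumf F2 p = 1.
Proof.
move=> k1; rewrite (@sumf_one R _ F2 p n) /F2 ?k1 // => m mn.
by have := @kk_disj R m n (phi p.1) mn; rewrite k1 mulr1.
Qed.

Let K2 := ext K1 F2.

Definition EA := [set p : (T * R) * R | phi p.1.1 <= 0] `&`
  ([set p | p.1.2 <= 0] `&` [set p | p.2 = 0]).
Definition EB := [set p : (T * R) * R | 0 <= phi p.1.1] `&`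
  ([set p | p.2 = 1] `|` ([set p | 2/3 <= p.1.2] `|` [set p | 1/2 <= phi p.1.1])).

Lemma cphi2 : continuous (fun p : (T * R) * R => phi p.1.1).
Proof.
move=> p; have := @continuous_comp _ _ _ (@fst (T * R)%type R) (fun q : T * R => phi q.1) p
  (@fst_cont (T * R)%type R p) (cphi1 id (fun x => cvg_id) _).
by move=> H; apply: H.
Qed.

Lemma c12 : continuous (fun p : (T * R) * R => p.1.2).
Proof.
move=> p; have := @continuous_comp _ _ _ (@fst (T * R)%type R) (@snd T R) p
  (@fst_cont (T * R)%type R p) (@snd_cont T R _).
by move=> H; apply: H.
Qed.

Lemma EA_closed : closed EA.
Proof.
apply: closedI; first exact: (@pre_closed _ _ _ [set s : R | s <= 0] cphi2 (@closed_le R 0)).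
apply: closedI; first exact: (@pre_closed _ _ _ [set s : R | s <= 0] c12 (@closed_le R 0)).
exact: (@pre_closed _ _ _ [set s : R | s = 0] (@snd_cont (T * R)%type R) (@closed_eq R 0)).
Qed.

Lemma EB_closed : closed EB.
Proof.
apply: closedI; first exact: (@pre_closed _ _ _ [set s : R | 0 <= s] cphi2 (@closed_ge R 0)).
apply: closedU; first exact: (@pre_closed _ _ _ [set s : R | s = 1] (@snd_cont (T * R)%type R) (@closed_eq R 1)).
apply: closedU; first exact: (@pre_closed _ _ _ [set s : R | 2/3 <= s] c12 (@closed_ge R (2/3))).
exact: (@pre_closed _ _ _ [set s : R | 1/2 <= s] cphi2 (@closed_ge R (1/2))).
Qed.

Lemma EAB : EA `&` EB = set0.
Proof.
apply/seteqP; split => // p [[a1 [a2 a3]] [b1 b2]] /=; move: a1 a2 a3 b1 b2 => /= a1 a2 a3 b1.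
case=> [/= b2|[/= b2|/= b2]]; lra.
Qed.

Lemma K2_cover : K2 `<=` EA `|` EB.
Proof.
have cAB : closed (EA `|` EB) by apply: closedU; [exact: EA_closed|exact: EB_closed].
suff GP : [set p | Dset K1 F2 p.1 /\ p.2 = sumf F2 p.1] `<=` EA `|` EB.
  by move=> p /(closureS GP); rewrite -(closure_id _).1.
move=> -[[x t1] t2] /= [D2 ->]; have K1p : K1 (x, t1) by case: D2.
case: (ltgtP (phi x) 0) => hx.
- left; split => /=; first exact: ltW.
  split => /=; first by rewrite (K1_neg _ _ K1p hx).
  by apply: sumF2_nonpos; exact: ltW.
- case: (leP (1/2) (phi x)) => h2.
    by right; split => /=; [exact: ltW|right; right].
  have w2 : (2 : R) <= (phi x)^-1.
    have : (2^-1)^-1 < (phi x)^-1 by rewrite lt_inv //; lra.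
    by rewrite invrK => /ltW.
  have [m hm] := find_m (phi x) hx w2.
  have Et := K1_pos _ _ _ K1p hx hm.
  right; split => /=; first exact: ltW.
  case: (tri (phi x) m hx hm) => [k1|[k1|g23]].
  + by left => /=; exact: (sumF2_one (x, t1) m.+1 k1).
  + by left => /=; exact: (sumF2_one (x, t1) m.+2 k1).
  + by right; left => /=; rewrite Et.
- have s0 : sumf F2 (x, t1) = 0 by apply: sumF2_nonpos; rewrite /= hx.
  case: (leP t1 0) => ht0.
    by left; split => /=; [rewrite hx|split].
  case: (leP (2/3) t1) => ht1.
    by right; split => /=; [rewrite hx|right; left].
  by exfalso; apply: (@hard (x, t1)) => //; rewrite ht0 ht1.
Qed.


Lemma cphi1' : continuous (fun p : T * R => phi p.1).
Proof. by apply: (cphi1 id) => x; exact: cvg_id. Qed.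

Lemma pt_neg a : phi a < 0 -> K2 ((a, 0), 0).
Proof.
move=> ha.
have D1 : Dset [set: T] F1 a.
  apply: (@Dset_intro R T [set: T] [set x | phi x < 0]) => //.
  - exact: (@pre_open _ _ phi [set s : R | s < 0] phic (@open_lt R 0)).
  - move=> n y Vy _ sy.
    have cC : closed [set x : T | 0 <= phi x].
      exact: (@pre_closed _ _ phi [set s : R | 0 <= s] phic (@closed_ge R 0)).
    have H : forall x, [set: T] x -> F1 n x != 0 -> 0 <= phi x.
      by move=> x _; rewrite /F1 => /g1_supp[x0 _]; exact: ltW.
    have := @supp_sub R T [set: T] [set x | 0 <= phi x] (F1 n) cC H y sy.
    by move: Vy => /=; rewrite ltNge => /negP.
have K1a : K1 (a, 0).
  by have := @graph_ext R _ _ _ _ D1; rewrite sumF1_nonpos //; exact: ltW.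
have D2 : Dset K1 F2 (a, 0).
  apply: (@Dset_intro R _ K1 [set p : T * R | phi p.1 < 0]) => //.
  - exact: (openW1 [set s : R | s < 0] (@open_lt R 0)).
  - move=> n y Vy _ sy.
    have cC : closed [set p : T * R | 0 <= phi p.1].
      exact: (@pre_closed _ _ _ [set s : R | 0 <= s] cphi1' (@closed_ge R 0)).
    have H : forall x, K1 x -> F2 n x != 0 -> 0 <= phi x.1.
      by move=> x _; rewrite /F2 => /kk_supp[x0 _]; exact: ltW.
    have := @supp_sub R _ K1 [set p : T * R | 0 <= phi p.1] (F2 n) cC H y sy.
    by move: Vy => /=; rewrite ltNge => /negP.
by have := @graph_ext R _ _ _ _ D2; rewrite sumF2_nonpos //= ltW.
Qed.

Lemma pt_big b : 2 < phi b -> K2 ((b, 0), 0).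
Proof.
move=> hb.
have D1 : Dset [set: T] F1 b.
  apply: (@Dset_intro R T [set: T] [set x | 2 < phi x]) => //.
  - exact: (@pre_open _ _ phi [set s : R | 2 < s] phic (@open_gt R 2)).
  - move=> n y Vy _ sy.
    have cC : closed [set x : T | phi x <= 2].
      exact: (@pre_closed _ _ phi [set s : R | s <= 2] phic (@closed_le R 2)).
    have H : forall x, [set: T] x -> F1 n x != 0 -> phi x <= 2.
      by move=> x _; rewrite /F1 => /g1_lt1 x0; apply: ltW; apply: lt_trans x0 _; lra.
    have := @supp_sub R T [set: T] [set x | phi x <= 2] (F1 n) cC H y sy.
    by move: Vy => /=; rewrite ltNge => /negP.
have K1b : K1 (b, 0).
  by have := @graph_ext R _ _ _ _ D1; rewrite sumF1_big //; exact: ltW.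
have D2 : Dset K1 F2 (b, 0).
  apply: (@Dset_intro R _ K1 [set p : T * R | 2 < phi p.1]) => //.
  - exact: (openW1 [set s : R | 2 < s] (@open_gt R 2)).
  - move=> n y Vy _ sy.
    have cC : closed [set p : T * R | phi p.1 <= 2].
      exact: (@pre_closed _ _ _ [set s : R | s <= 2] cphi1' (@closed_le R 2)).
    have H : forall x, K1 x -> F2 n x != 0 -> phi x.1 <= 2.
      by move=> x _; rewrite /F2 => /kk_lt2 x0; exact: ltW.
    have := @supp_sub R _ K1 [set p : T * R | phi p.1 <= 2] (F2 n) cC H y sy.
    by move: Vy => /=; rewrite ltNge => /negP.
by have := @graph_ext R _ _ _ _ D2; rewrite sumF2_big //= ltW.
Qed.

Let K3 := ext K2 F3.

Lemma K3_sub : K3 `<=` [set q | K2 q.1].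
Proof.
have cC : closed [set q : (T * R) * R * R | K2 q.1].
  exact: (@pre_closed _ _ _ K2 (@fst_cont ((T * R) * R)%type R) (@closed_closure _ _)).
suff GP : [set p | Dset K2 F3 p.1 /\ p.2 = sumf F3 p.1] `<=` [set q | K2 q.1].
  by move=> p /(closureS GP); rewrite -(closure_id _).1.
by move=> -[p t] /= [[]].
Qed.

Lemma pt3 p : K2 p -> K3 (p, 0).
Proof.
move=> K2p.
have D : Dset K2 F3 p.
  apply: (@Dset_intro R _ K2 setT) => //; first exact: openT.
  move=> n y _ _ sy.
  have H : forall x, K2 x -> F3 n x != 0 -> (set0 : set ((T * R) * R)) x.
    by move=> x _; rewrite /F3 eqxx.
  exact: (@supp_sub R _ K2 set0 (F3 n) closed0 H y sy).
by have := @graph_ext R _ _ _ _ D; rewrite sumf_zero.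
Qed.

Lemma notconn3 a b : phi a < 0 -> 2 < phi b -> ~ connected K3.
Proof.
move=> ha hb.
apply: (@not_conn _ K3 [set q | EA q.1] [set q | EB q.1]).
- exact: (@pre_closed _ _ _ EA (@fst_cont ((T * R) * R)%type R) EA_closed).
- exact: (@pre_closed _ _ _ EB (@fst_cont ((T * R) * R)%type R) EB_closed).
- by move=> q /K3_sub /K2_cover.
- apply/seteqP; split => // q [/= h1 h2].
  suff : (EA `&` EB) q.1 by rewrite EAB.
  by split.
- exists (((a, 0), 0), 0); split; first exact/pt3/pt_neg.
  by split => /=; [exact: ltW|split].
- exists (((b, 0), 0), 0); split; first exact/pt3/pt_big.
  split => /=; first by apply: ltW; apply: lt_trans hb; lra.
  by right; right => /=; apply: ltW; apply: lt_trans hb; lra.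
Qed.

Lemma main_pack a b : phi a < 0 -> 2 < phi b -> compact [set: T] ->
  [/\ disj_seq_C1 [set: T] F1, disj_seq_C1 K1 F2, disj_seq_C1 K2 F3,
      compact K1 /\ compact K2 /\ compact K3 & ~ connected K3].
Proof.
move=> ha hb cT.
have [c1 k1] := @ext_compact R _ _ _ cT closedT F1_disj.
have [c2 k2] := @ext_compact R _ _ _ c1 k1 (F2_disj K1).
have [c3 _] := @ext_compact R _ _ _ c2 k2 (F3_disj K2).
split; [exact: F1_disj|exact: F2_disj|exact: F3_disj|by split; [|split]|exact: (notconn3 _ _ ha hb)].
Qed.

End Main.

Lemma sep_ent (R : realType) (T : pseudoMetricType R) (hT : hausdorff_space T) (a b : T) :
  a <> b -> exists2 E : set (T * T), entourage E & [set a] `*` [set b] `&` E = set0.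
Proof.
move=> ab; apply: contrapT => H; apply: ab; apply: hT => A B nA nB.
apply: contrapT => nAB; apply: H.
have [E1 eE sE] := (nbhsP a A).1 nA.
exists E1 => //; apply/seteqP; split => // -[x y] /= [[/= -> ->] E1ab].
apply: nAB; exists b; split; last exact: nbhs_singleton nB.
by apply: sE; rewrite /xsection /= inE.
Qed.

Theorem mainTheorem5 (R : realType) (T : pseudoMetricType R)
  (hausT : hausdorff_space T) (compT : compact [set: T])
  (connT : connected [set: T]) (nondeg : exists x y : T, x <> y) :
  exists (f1 : nat -> T -> R) (f2 : nat -> (T * R)%type -> R)
         (f3 : nat -> ((T * R) * R)%type -> R),
    let K0 := [set: T] in
    let K1 := ext K0 f1 in
    let K2 := ext K1 f2 in
    let K3 := ext K2 f3 in
    [/\ disj_seq_C1 K0 f1, disj_seq_C1 K1 f2, disj_seq_C1 K2 f3,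
        compact K1 /\ compact K2 /\ compact K3
      & ~ connected K3].
Proof.
have [a [b ab]] := nondeg.
have us : uniform_separator [set a] [set b].
  by apply: uniform_separatorW; exact: sep_ent.
set u := @Urysohn T R [set a] [set b].
have ua : u a = 0.
  have := @Urysohn_eq0 T R [set a] [set b] us (ex_intro _ a erefl).
  move=> E; have : [set u x | x in [set a]] (u a) by exists a.
  by rewrite /u E.
have ub : u b = 1.
  have := @Urysohn_eq1 T R [set a] [set b] us (ex_intro _ b erefl).
  move=> E; have : [set u x | x in [set b]] (u b) by exists b.
  by rewrite /u E.
set phi := fun x => 4 * u x - 1.
have phic : continuous phi.
  move=> x; have := @contB R _ (fun x => 4 * u x) (fun=> 1) x; move=> H; apply: H; last exact: contC.
  have := @contM R _ (fun=> 4) u x; move=> H; apply: H; first exact: contC.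
  exact: Urysohn_continuous.
have ha : phi a < 0 by rewrite /phi ua mulr0 sub0r ltrN10.
have hb : 2 < phi b by rewrite /phi ub mulr1; lra.
exists (@F1 R T phi), (@F2 R T phi), (@F3 R T).
move=> K0 K1 K2 K3.
exact: (@main_pack R T phi phic a b ha hb compT).
Qed.
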